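(* Let $N$ be the set of the 24 neutral triads $\{x,x+7,x+14\}\subset\mathbb{Z}_{24}$, $x\in\mathbb{Z}_{24}$. The map $L:N\to N$, $L\langle x,x+7,x+14\rangle=I_{2x+21}\langle x,x+7,x+14\rangle$ (where $I_n(y)=-y+n$ mod 24 componentwise), generates a cyclic group of permutations of $N$ isomorphic to $\mathbb{Z}_{24}$.
   Context: A neutral triad with root $x$ is written $\langle x,x+7,x+14\rangle$; in general the Leading Tone Exchange function is $L\langle y_1,y_2,y_3\rangle=I_{y_2+y_3}\langle y_1,y_2,y_3\rangle$, which on neutral triads gives the formula above. Triads are compared as unordered subsets of $\mathbb{Z}_{24}$. *)

(* Defs.v *)
From HB Require Import structures.
From mathcomp Require Import all_boot all_order all_algebra all_fingroup.
Set Implicit Arguments. Unset Strict Implicit. Unset Printing Implicit Defensive.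
Import GRing.Theory.
Local Open Scope ring_scope.

Notation Z24 := 'Z_24.

Definition ntriad (x : Z24) : {set Z24} := [set x; x + 7; x + 14].

Definition N : {set {set Z24}} := [set ntriad x | x : Z24].

Definition Inv (n : Z24) (y : Z24) : Z24 := - y + n.

Definition root_of (S : {set Z24}) : Z24 := odflt 0 [pick x | ntriad x == S].

Definition Lmap (S : {set Z24}) : {set Z24} :=
  [set Inv (2 * root_of S + 21) y | y in S].

Definition Ntype := {S : {set Z24} | S \in N}.

(* Main.v *)
Require Import Defs.
From mathcomp Require Import all_boot all_order all_algebra all_fingroup all_solvable ring.
Import GRing.Theory.

Local Open Scope ring_scope.

Lemma eq_addr_self (y c : Z24) : (y == y + c) = (c == 0).
Proof. by rewrite -{1}(addr0 y) (inj_eq (addrI y)) eq_sym. Qed.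

Lemma Z24E (c : Z24) : (c == 0) = (nat_of_ord c == 0%N).
Proof. by []. Qed.

Lemma n7 : (7 : Z24) != 0. Proof. by rewrite Z24E. Qed.
Lemma n14 : (14 : Z24) != 0. Proof. by rewrite Z24E. Qed.
Lemma n77 : (7 : Z24) + 7 != 0. Proof. by rewrite Z24E. Qed.
Lemma n714 : (7 : Z24) + 14 != 0. Proof. by rewrite Z24E. Qed.
Lemma n147 : (14 : Z24) + 7 != 0. Proof. by rewrite Z24E. Qed.
Lemma n1414 : (14 : Z24) + 14 != 0. Proof. by rewrite Z24E. Qed.

Lemma ntriad_inj : injective ntriad.
Proof.
move=> x y E.
have hx : x \in ntriad y by rewrite -E /ntriad !inE eqxx.
have hy : y \in ntriad x by rewrite E /ntriad !inE eqxx.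
move: hx hy; rewrite /ntriad !inE.
have V (c : Z24) : c != 0 -> y = y + c -> False.
  move=> /eqP hc h; apply: hc; apply: (@addrI _ y); rewrite addr0 -h.
  by [].
have V2 (a b : Z24) : a + b != 0 -> y = y + a + b -> False.
  by rewrite -addrA; apply: V.
case/orP => [/orP [] |] /eqP ->.
- by [].
- by case/orP => [/orP [] |] /eqP; [move/(V _ n7) | move/(V2 _ _ n77) | move/(V2 _ _ n714)].
- by case/orP => [/orP [] |] /eqP; [move/(V _ n14) | move/(V2 _ _ n147) | move/(V2 _ _ n1414)].
Qed.

Lemma root_ntriad x : root_of (ntriad x) = x.
Proof.
rewrite /root_of; case: pickP => [y /eqP /ntriad_inj -> //|].
by move/(_ x); rewrite eqxx.
Qed.

Lemma shift x : [set Inv (2 * x + 21)%R y | y in ntriad x] = ntriad (x+7)%R.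
Proof.
rewrite /ntriad !(imsetU, imsetU1, imset_set1) /Inv.
have -> : - x + (2 * x + 21) = x + 7 + 14 by ring.
have -> : - (x + 7) + (2 * x + 21) = x + 14 by ring.
have -> : - (x + 14) + (2 * x + 21) = x + 7 by ring.
have -> : x + 7 + 7 = x + 14 by ring.
by apply/setP => z; rewrite !inE; case: (z == _); case: (z == _); case: (z == _).
Qed.

Lemma Lmap_ntriad x : Lmap (ntriad x) = ntriad (x + 7).
Proof. by rewrite /Lmap root_ntriad shift. Qed.

Lemma ntriad_in x : ntriad x \in N.
Proof. by apply/imsetP; exists x. Qed.

Definition Sx (x : Z24) : Ntype := exist _ (ntriad x) (ntriad_in x).

Lemma Sx_surj (S : Ntype) : exists x, S = Sx x.
Proof.
case: S => v H; have := H; case/imsetP => x _ Ev.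
by exists x; apply: val_inj; rewrite /= Ev.
Qed.

Lemma Sx_inj : injective Sx.
Proof. by move=> x y /(congr1 val) /ntriad_inj. Qed.

Definition fN (S : Ntype) : Ntype := Sx (root_of (val S) + 7).

Lemma fN_Sx x : fN (Sx x) = Sx (x + 7).
Proof. by rewrite /fN /= root_ntriad. Qed.

Lemma fN_inj : injective fN.
Proof.
move=> S T; case: (Sx_surj S) => x ->; case: (Sx_surj T) => y ->.
by rewrite !fN_Sx => /Sx_inj /addIr ->.
Qed.

Definition pL : {perm Ntype} := perm fN_inj.

Lemma pLX x n : (pL ^+ n)%g (Sx x) = Sx (x + 7 *+ n).
Proof.
rewrite permX; elim: n => [|n IH]; first by rewrite addr0.
by rewrite iterS IH /pL permE fN_Sx -addrA -mulrSr.
Qed.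

Lemma order_pL : #[pL]%g = 24%N.
Proof.
have d : (#[pL]%g %| 24)%N.
  rewrite order_dvdn; apply/eqP/permP => S; case: (Sx_surj S) => x ->.
  rewrite pLX perm1; congr Sx; rewrite -[RHS]addr0; congr (_ + _).
  by apply/eqP; rewrite Z24E Zp_mulrn.
have e := expg_order pL.
have h : ((7 * #[pL]%g) %% 24 == 0)%N.
  suff /eqP : (7 : Z24) *+ #[pL]%g = 0 by rewrite Z24E Zp_mulrn.
  have := congr1 (fun q : {perm Ntype} => q (Sx 0)) e => /=.
  by rewrite pLX perm1 add0r => /Sx_inj.
have lt : (#[pL]%g <= 24)%N by apply: dvdn_leq.
have gt := order_gt0 pL.
move: #[pL]%g lt gt h d => n.
by do 25 (case: n => [|n] //).
Qed.

Theorem mainTheorem6 :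
  #|N| = 24 /\
  (forall x : Z24, Lmap (ntriad x) = [set Inv (2 * x + 21)%R y | y in ntriad x]) /\
  exists p : {perm Ntype},
    (forall S : Ntype, val (p S) = Lmap (val S)) /\
    (<[p]> \isog Zp 24)%g.
Proof.
split; first by rewrite card_imset //; [rewrite card_ord | exact: ntriad_inj].
split; first by move=> x; rewrite Lmap_ntriad shift.
exists pL; split.
  move=> S; case: (Sx_surj S) => x ->.
  by rewrite /pL permE fN_Sx /= Lmap_ntriad.
rewrite isog_cyclic_card ?cycle_cyclic //; apply/andP; split.
  apply/cyclicP; exists Zp1; exact: Zp_cycle.
by rewrite card_Zp // -orderE order_pL.
Qed.
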